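(* For $\ell\in\mathbb N_0$ and $z>1$ let $\phi_\ell(z)=\int_{-1}^1\frac{P_\ell(y)}{y+z}dy$. Then: (i) for every $z>1$, $\phi_1(z)<\phi_3(z)<\phi_5(z)<\dots<0$; (ii) for odd $\ell$, $z\mapsto\phi_\ell(z)$ is smooth and strictly increasing on $(1,\infty)$, and $\phi_\ell(z)=-\frac{2^{-\ell}\int_{-1}^1(1-y^2)^\ell dy}{(z-1)^{\ell+1}}(1+o(1))$ as $z\to+\infty$; (iii) for odd $\ell$, $|\phi_\ell(z)|\leqslant\frac{2^{-\ell}\int_{-1}^1(1-y^2)^\ell dy}{(z-1)^{\ell+1}}$ for all $z>1$, and $|\phi_\ell(z)|\leqslant\frac{C_\ell\,2^{-\ell}\int_{-1}^1(1-y^2)^\ell dy}{z^{\ell+1}}$ for all $z>1+m^*$, where $C_\ell=\frac{2^\ell(1+m^* )^{\ell+1}\int_{-1}^1\frac{-P_\ell(y)}{y+1+m^*}dy}{\int_{-1}^1(1-y^2)^\ell dy}$.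
   Context: $P_\ell(y)=\frac{1}{2^\ell\ell!}\frac{d^\ell}{dy^\ell}(y^2-1)^\ell$ is the $\ell$-th Legendre polynomial. $m^*>0$ is the unique root of $\Lambda(m)=1$, where $\Lambda(m)=\frac{2}{\pi}(m+1)^2\big(\frac{1}{\sqrt{m(m+2)}}-\arcsin\frac{1}{m+1}\big)$ (numerically $m^*\approx(13.607)^{-1}$). *)

(* Defs.v *)
From Stdlib Require Import Reals Lra List Arith Factorial ClassicalEpsilon.
Open Scope R_scope.

(* Rint f a b = RiemannInt of f on [a,b] when f is Riemann integrable there
   (the value does not depend on the integrability witness), 0 otherwise. *)
Definition Rint (f : R -> R) (a b : R) : R :=
  match excluded_middle_informative (inhabited (Riemann_integrable f a b)) with
  | left h => RiemannInt (epsilon h (fun _ => True))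
  | right _ => 0
  end.

(* [a0; a1; ...; an] represents a0 + a1 y + ... + an y^n *)
Fixpoint peval (p : list R) (y : R) : R :=
  match p with nil => 0 | a :: t => a + y * peval t y end.

Fixpoint padd (p q : list R) : list R :=
  match p, q with
  | nil, _ => q
  | _, nil => p
  | a :: p', b :: q' => (a + b) :: padd p' q'
  end.

Fixpoint pmul (p q : list R) : list R :=
  match p with
  | nil => nil
  | a :: t => padd (map (Rmult a) q) (0 :: pmul t q)
  end.

Fixpoint ppow (p : list R) (n : nat) : list R :=
  match n with O => 1 :: nil | S k => pmul p (ppow p k) end.

Fixpoint pderiv_aux (k : nat) (p : list R) : list R :=
  match p with nil => nil | a :: t => (INR k * a) :: pderiv_aux (S k) t end.

Definition pderiv (p : list R) : list R :=
  match p with nil => nil | _ :: t => pderiv_aux 1 t end.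

Definition Legendre (l : nat) (y : R) : R :=
  / (2 ^ l * INR (fact l)) *
  peval (Nat.iter l pderiv (ppow ((-1) :: 0 :: 1 :: nil) l)) y.

Definition phi (l : nat) (z : R) : R :=
  Rint (fun y => Legendre l y / (y + z)) (-1) 1.

Definition Lambda (m : R) : R :=
  2 / PI * (m + 1) ^ 2 * (1 / sqrt (m * (m + 2)) - asin (1 / (m + 1))).

(* f is C^infinity on the open interval (a, +oo): there is a sequence of
   functions, starting at f, each the derivative of the previous on (a,+oo). *)
Definition smooth_on_gt (a : R) (f : R -> R) : Prop :=
  exists D : nat -> R -> R,
    (forall z, a < z -> D O z = f z) /\
    (forall n z, a < z -> derivable_pt_lim (D n) z (D (S n) z)).

Definition Aconst (l : nat) : R :=
  / 2 ^ l * Rint (fun y => (1 - y ^ 2) ^ l) (-1) 1.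

Definition Cconst (mstar : R) (l : nat) : R :=
  2 ^ l * (1 + mstar) ^ (l + 1) *
  Rint (fun y => - Legendre l y / (y + 1 + mstar)) (-1) 1
  / Rint (fun y => (1 - y ^ 2) ^ l) (-1) 1.

(* Main.v *)
Require Import Defs.
From Coquelicot Require Import Coquelicot.
From Stdlib Require Import Reals Lra Lia List ClassicalEpsilon Factorial Arith.
Open Scope R_scope.


Lemma peval_padd p q y : peval (padd p q) y = peval p y + peval q y.
Proof.
  revert q; induction p as [|a p IH]; intros [|b q]; simpl; try ring.
  rewrite IH; ring.
Qed.

Lemma peval_map a q y : peval (List.map (Rmult a) q) y = a * peval q y.
Proof. induction q as [|b q IH]; simpl; [ring|rewrite IH; ring]. Qed.

Lemma peval_pmul p q y : peval (pmul p q) y = peval p y * peval q y.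
Proof.
  induction p as [|a p IH]; simpl; [ring|].
  rewrite peval_padd, peval_map; simpl; rewrite IH; ring.
Qed.

Lemma peval_ppow p n y : peval (ppow p n) y = (peval p y) ^ n.
Proof. induction n; simpl; [ring|rewrite peval_pmul, IHn; ring]. Qed.

Lemma peval_pderiv_aux t : forall k y,
  peval (pderiv_aux k t) y = INR k * peval t y + y * peval (pderiv t) y.
Proof.
  induction t as [|b t IH]; intros k y; simpl; [ring|].
  rewrite !IH, S_INR. simpl. ring.
Qed.

Lemma peval_deriv_R p y : derivable_pt_lim (peval p) y (peval (pderiv p) y).
Proof.
  induction p as [|a t IH]; simpl.
  - apply derivable_pt_lim_const.
  - replace (peval (pderiv_aux 1 t) y) with (0 + (1 * peval t y + y * peval (pderiv t) y)).
    2:{ rewrite peval_pderiv_aux. simpl. ring. }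
    apply (derivable_pt_lim_plus (fun _ : R => a) (fun y => y * peval t y)).
    + apply derivable_pt_lim_const.
    + replace (1 * peval t y + y * peval (pderiv t) y) with
        (1 * peval t y + id y * peval (pderiv t) y) by reflexivity.
      apply (derivable_pt_lim_mult id (peval t)); [apply derivable_pt_lim_id|exact IH].
Qed.

Lemma peval_deriv p y : is_derive (peval p) y (peval (pderiv p) y).
Proof. apply is_derive_Reals, peval_deriv_R. Qed.

Lemma peval_cont p y : continuous (peval p) y.
Proof. apply (ex_derive_continuous (peval p)). eexists. apply peval_deriv. Qed.


Definition U2 := (-1) :: 0 :: 1 :: nil.
Definition Fp (l j : nat) := Nat.iter j pderiv (ppow U2 l).

Lemma peval_U2 y : peval U2 y = y ^ 2 - 1.
Proof. unfold U2; simpl; ring. Qed.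

Lemma Fp_S l j y : is_derive (peval (Fp l j)) y (peval (Fp l (S j)) y).
Proof. unfold Fp. simpl. apply peval_deriv. Qed.

Lemma Fp_repr l : forall j, (j <= l)%nat -> exists G, forall y,
  peval (Fp l j) y = (y ^ 2 - 1) ^ (l - j) * peval G y.
Proof.
  induction j as [|j IH]; intros Hj.
  - exists (1 :: nil). intros y. unfold Fp; simpl Nat.iter.
    rewrite peval_ppow, peval_U2. simpl. rewrite Nat.sub_0_r. ring.
  - destruct (IH ltac:(lia)) as [G HG].
    remember (l - S j)%nat as r eqn:Hr.
    assert (Hlj : (l - j = S r)%nat) by lia.
    exists (padd (List.map (Rmult (INR r + 1)) (pmul (0 :: 2 :: nil) G)) (pmul U2 (pderiv G))).
    intros y.
    assert (H1 : is_derive (fun y => (y^2-1)^(S r) * peval G y) y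
       ((INR r + 1) * (2 * y) * (y^2-1)^r * peval G y + (y^2-1)^(S r) * peval (pderiv G) y)).
    { auto_derive. { eexists; apply peval_deriv. }
      replace (Derive (fun x => peval G x) y) with (peval (pderiv G) y) by (symmetry; apply is_derive_unique, peval_deriv).
      change (match r with 0%nat => 1 | S _ => INR r + 1 end) with (INR (S r)).
      rewrite S_INR. simpl.
      replace (y * (y * 1) + - (1)) with (y^2-1) by ring.
      try replace (y * (y * 1) - 1) with (y^2-1) by ring.
      ring. }
    assert (H2 : is_derive (fun y => (y^2-1)^(S r) * peval G y) y (peval (Fp l (S j)) y)).
    { apply (is_derive_ext (peval (Fp l j))).
      - intros t. rewrite HG, Hlj. reflexivity.
      - apply Fp_S. }
    rewrite <- (is_derive_unique _ _ _ H2), (is_derive_unique _ _ _ H1).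
    rewrite peval_padd, peval_map, !peval_pmul, peval_U2. simpl. ring.
Qed.

Lemma Fp_bound l j : (j < l)%nat -> peval (Fp l j) 1 = 0 /\ peval (Fp l j) (-1) = 0.
Proof.
  intros Hj. destruct (Fp_repr l j ltac:(lia)) as [G HG].
  rewrite !HG. replace (l - j)%nat with (S (l - j - 1)) by lia.
  simpl. split; ring.
Qed.


Lemma Rint_RInt f a b : ex_RInt f a b -> Rint f a b = RInt f a b.
Proof.
  intros H. unfold Rint.
  destruct (ClassicalEpsilon.excluded_middle_informative _) as [h|h].
  - symmetry. apply RInt_Reals.
  - exfalso. apply h. constructor. apply ex_RInt_Reals_0. exact H.
Qed.

Lemma ex_RInt_c (f : R -> R) : (forall y, -1 <= y <= 1 -> continuous f y) -> ex_RInt f (-1) 1.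
Proof.
  intros H. apply (ex_RInt_continuous (V := R_CompleteNormedModule)). intros y.
  rewrite Rmin_left, Rmax_right by lra. apply H.
Qed.

Lemma inv_pow_deriv m z y : y + z <> 0 ->
  is_derive (fun y => / (y + z) ^ m) y (- INR m / (y + z) ^ (S m)).
Proof.
  intros Hz. induction m as [|m IH].
  - simpl. replace (- 0 / ((y + z) * 1)) with 0 by (field; auto).
    apply (is_derive_ext (fun _ => 1)). { intros; simpl; field. }
    apply (is_derive_const 1).
  - apply (is_derive_ext (fun y => / (y + z) * / (y + z) ^ m)).
    { intros t. simpl. destruct (Req_dec (t+z) 0) as [E|E].
      + rewrite E. rewrite Rmult_0_l, Rinv_0. ring.
      + rewrite Rinv_mult. reflexivity. }
    assert (H1 : is_derive (fun y => / (y + z)) y (- / (y+z)^2)).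
    { auto_derive; auto. field; auto. }
    replace (- INR (S m) / (y + z) ^ S (S m)) with
      (- / (y+z)^2 * / (y+z)^m + / (y+z) * (- INR m / (y + z) ^ (S m))).
    2:{ rewrite S_INR. simpl. field. split; auto. apply pow_nonzero; auto. }
    apply (is_derive_mult (fun y => / (y+z)) (fun y => / (y+z)^m)); auto.
    intros; apply Rmult_comm.
Qed.

Lemma cont_gw (g : R -> R) m z y : ex_derive g y -> y + z <> 0 ->
  continuous (fun y => g y / (y + z) ^ m) y.
Proof.
  intros Hg Hz. apply (ex_derive_continuous (fun y => g y * / (y + z) ^ m)).
  apply (ex_derive_mult g (fun y => / (y + z) ^ m)); auto.
  eexists. apply inv_pow_deriv; auto.
Qed.

Lemma ex_RInt_gw (g : R -> R) m z : 1 < z -> (forall y, ex_derive g y) ->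
  ex_RInt (fun y => g y / (y + z) ^ m) (-1) 1.
Proof.
  intros Hz Hg. apply ex_RInt_c. intros y Hy. apply cont_gw; auto. lra.
Qed.

Lemma ibp_step l j m z : 1 < z -> (j < l)%nat ->
  RInt (fun y => peval (Fp l (S j)) y / (y + z) ^ m) (-1) 1 =
  INR m * RInt (fun y => peval (Fp l j) y / (y + z) ^ (S m)) (-1) 1.
Proof.
  intros Hz Hj.
  set (h := fun y => peval (Fp l j) y * / (y + z) ^ m).
  set (A := fun y => peval (Fp l (S j)) y / (y + z) ^ m).
  set (B := fun y => peval (Fp l j) y / (y + z) ^ (S m)).
  assert (Hd : forall y, -1 <= y -> is_derive h y (A y - INR m * B y)).
  { intros y Hy. unfold h, A, B.
    replace (peval (Fp l (S j)) y / (y + z) ^ m - INR m * (peval (Fp l j) y / (y + z) ^ S m))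
      with (peval (Fp l (S j)) y * / (y + z) ^ m + peval (Fp l j) y * (- INR m / (y + z) ^ S m))
      by (unfold Rdiv; ring).
    apply (is_derive_mult (peval (Fp l j)) (fun y => / (y + z) ^ m)).
    - apply Fp_S.
    - apply inv_pow_deriv. lra.
    - intros; apply Rmult_comm. }
  assert (HexA : ex_RInt A (-1) 1).
  { apply ex_RInt_gw; auto. intros y; eexists; apply peval_deriv. }
  assert (HexB : ex_RInt B (-1) 1).
  { apply ex_RInt_gw; auto. intros y; eexists; apply peval_deriv. }
  assert (HI : is_RInt (fun y => A y - INR m * B y) (-1) 1 (minus (h 1) (h (-1)))).
  { apply (is_RInt_derive h). 
    - intros y. rewrite Rmin_left, Rmax_right by lra. intros Hy. apply Hd; lra.
    - intros y. rewrite Rmin_left, Rmax_right by lra. intros Hy.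
      apply (continuous_minus A (fun y => INR m * B y)).
      + apply cont_gw; [eexists; apply peval_deriv|lra].
      + apply (continuous_scal_r (INR m) B). apply cont_gw; [eexists; apply peval_deriv|lra]. }
  assert (Hb : minus (h 1) (h (-1)) = 0).
  { unfold h. destruct (Fp_bound l j Hj) as [E1 E2]. rewrite E1, E2.
    unfold minus, plus, opp; simpl. ring. }
  rewrite Hb in HI. apply (is_RInt_unique (V := R_CompleteNormedModule)) in HI.
  rewrite (RInt_minus A (fun y => INR m * B y)) in HI; auto.
  2:{ apply (ex_RInt_scal B (-1) 1 (INR m)). auto. }
  pose proof (RInt_scal (V := R_CompleteNormedModule) B (-1) 1 (INR m) HexB) as HS.
  change (RInt (fun y => INR m * B y) (-1) 1 = INR m * RInt B (-1) 1) in HS.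
  rewrite HS in HI.
  unfold minus, plus, opp, scal in HI; simpl in HI. unfold mult in HI; simpl in HI.
  fold A B. lra.
Qed.

Lemma ibp_iter l z : 1 < z -> forall k j, (j + k = l)%nat ->
  RInt (fun y => peval (Fp l l) y / (y + z) ^ 1) (-1) 1 =
  INR (fact k) * RInt (fun y => peval (Fp l j) y / (y + z) ^ (S k)) (-1) 1.
Proof.
  intros Hz. induction k as [|k IH]; intros j Hjk.
  - replace j with l by lia. cbn [fact INR]. symmetry. apply Rmult_1_l.
  - rewrite (IH (S j)) by lia. rewrite ibp_step by (auto; lia).
    rewrite fact_simpl, mult_INR. rewrite <- Rmult_assoc, (Rmult_comm (INR (fact k))). reflexivity.
Qed.


Lemma Legendre_eq l y : Legendre l y = / (2 ^ l * INR (fact l)) * peval (Fp l l) y.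
Proof. reflexivity. Qed.

Lemma phi_formula l z : 1 < z ->
  phi l z = / 2 ^ l * RInt (fun y => (y ^ 2 - 1) ^ l / (y + z) ^ (S l)) (-1) 1.
Proof.
  intros Hz. unfold phi.
  set (c := / (2 ^ l * INR (fact l))).
  assert (Hex : ex_RInt (fun y => peval (Fp l l) y / (y + z) ^ 1) (-1) 1).
  { apply ex_RInt_gw; auto. intros y; eexists; apply peval_deriv. }
  assert (E : forall y, Legendre l y / (y + z) = c * (peval (Fp l l) y / (y + z) ^ 1)).
  { intros y. rewrite Legendre_eq. fold c. simpl. unfold Rdiv. rewrite Rmult_1_r. ring. }
  assert (Hex2 : ex_RInt (fun y => Legendre l y / (y + z)) (-1) 1).
  { eapply (ex_RInt_ext (V := R_CompleteNormedModule) (fun y => c * (peval (Fp l l) y / (y + z) ^ 1))).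
    - intros y _. symmetry. exact (E y).
    - exact (ex_RInt_scal (V := R_CompleteNormedModule) _ (-1) 1 c Hex). }
  rewrite (Rint_RInt _ _ _ Hex2).
  rewrite (RInt_ext (V := R_CompleteNormedModule) (fun y => Legendre l y / (y + z)) (fun y => scal c (peval (Fp l l) y / (y + z) ^ 1))).
  2:{ intros y _. apply E. }
  rewrite (RInt_scal (V := R_CompleteNormedModule)) by exact Hex.
  change (scal c ?x) with (c * x).
  rewrite (ibp_iter l z Hz l 0) by lia.
  rewrite (RInt_ext (fun y => peval (Fp l 0) y / (y + z) ^ S l)
                    (fun y => (y ^ 2 - 1) ^ l / (y + z) ^ S l)).
  2:{ intros y _. unfold Fp. simpl Nat.iter. rewrite peval_ppow, peval_U2. reflexivity. }
  unfold c. rewrite <- Rmult_assoc. f_equal. field.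
  split; [apply pow_nonzero; lra | apply not_0_INR, fact_neq_0].
Qed.

Lemma odd_pow_neg l x : Nat.odd l = true -> (- x) ^ l = - x ^ l.
Proof.
  intros H. apply Nat.odd_spec in H. destruct H as [k ->].
  replace (- x) with (-1 * x) by ring. rewrite Rpow_mult_distr.
  replace (2 * k + 1)%nat with (S (2 * k)) by lia. rewrite pow_1_odd. ring.
Qed.

Definition K (l : nat) (z : R) : R := RInt (fun y => (1 - y ^ 2) ^ l / (y + z) ^ (S l)) (-1) 1.

Lemma phi_K l z : 1 < z -> Nat.odd l = true -> phi l z = - / 2 ^ l * K l z.
Proof.
  intros Hz Ho. rewrite phi_formula by auto. unfold K.
  rewrite (RInt_ext (fun y => (y ^ 2 - 1) ^ l / (y + z) ^ S l)
                    (fun y => opp ((1 - y ^ 2) ^ l / (y + z) ^ S l))).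
  2:{ intros y _. replace (y ^ 2 - 1) with (- (1 - y ^ 2)) by ring.
      rewrite odd_pow_neg by auto. unfold opp; simpl. unfold Rdiv. ring. }
  rewrite (RInt_opp (V := R_CompleteNormedModule)).
  - unfold opp; simpl. ring.
  - apply ex_RInt_gw; auto. intros y. auto_derive. auto.
Qed.


Definition gl (l : nat) (y : R) := (1 - y ^ 2) ^ l.

Lemma gl_der l y : ex_derive (gl l) y.
Proof. unfold gl. auto_derive. auto. Qed.

Lemma gl_cont l y : continuous (gl l) y.
Proof. apply (ex_derive_continuous (gl l)). apply gl_der. Qed.

Lemma gl_pos l y : -1 < y < 1 -> 0 < gl l y.
Proof. intros H. unfold gl. apply pow_lt. nra. Qed.

Lemma RInt_mulc (f : R -> R) a b c : ex_RInt f a b ->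
  RInt (fun y => c * f y) a b = c * RInt f a b.
Proof.
  intros H. exact (RInt_scal (V := R_CompleteNormedModule) f a b c H).
Qed.

Lemma RInt_pos (g : R -> R) a b : a < b -> (forall y, a <= y <= b -> continuous g y) ->
  (forall y, a < y < b -> 0 < g y) -> 0 < RInt g a b.
Proof.
  intros Hab Hc Hp.
  assert (H := RInt_lt (fun _ => 0) g a b Hab Hc (fun y _ => continuous_const 0 y) Hp).
  rewrite RInt_const in H. change (scal (b - a) 0) with ((b - a) * 0) in H.
  lra.
Qed.

Definition Il (l : nat) : R := RInt (gl l) (-1) 1.

Lemma ex_Il l : ex_RInt (gl l) (-1) 1.
Proof. apply ex_RInt_c. intros; apply gl_cont. Qed.

Lemma Il_pos l : 0 < Il l.
Proof. apply RInt_pos; [lra| intros; apply gl_cont | intros; apply gl_pos; lra]. Qed.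

Lemma Aconst_I l : Aconst l = / 2 ^ l * Il l.
Proof. unfold Aconst. rewrite (Rint_RInt (gl l)); [reflexivity| apply ex_Il]. Qed.

Lemma cont_K l m z y : y + z <> 0 -> continuous (fun y => gl l y / (y + z) ^ m) y.
Proof. intros H. apply cont_gw; auto. apply gl_der. Qed.

Lemma ex_K l m z : 1 < z -> ex_RInt (fun y => gl l y / (y + z) ^ m) (-1) 1.
Proof. intros H. apply ex_RInt_gw; auto. apply gl_der. Qed.

Lemma K_eq l z : K l z = RInt (fun y => gl l y / (y + z) ^ (S l)) (-1) 1.
Proof. reflexivity. Qed.

Lemma K_pos l z : 1 < z -> 0 < K l z.
Proof.
  intros Hz. rewrite K_eq. apply RInt_pos; [lra| intros; apply cont_K; lra|].
  intros y Hy. apply Rdiv_lt_0_compat; [apply gl_pos; lra| apply pow_lt; lra].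
Qed.

Lemma pow_lt_S a b n : 0 <= a < b -> a ^ (S n) < b ^ (S n).
Proof.
  intros H. induction n as [|n IH].
  - simpl. lra.
  - change (a * a ^ S n < b * b ^ S n).
    apply Rmult_le_0_lt_compat; try lra. apply pow_le; lra.
Qed.

Lemma inv_pow_lt a b n : 0 < a < b -> /b ^ (S n) < / a ^ (S n).
Proof.
  intros H. apply Rinv_lt_contravar.
  - apply Rmult_lt_0_compat; apply pow_lt; lra.
  - apply pow_lt_S; lra.
Qed.

Lemma inv_pow_le a b n : 0 < a <= b -> /b ^ n <= / a ^ n.
Proof.
  intros H. apply Rinv_le_contravar.
  - apply pow_lt; lra.
  - apply pow_incr; lra.
Qed.

Lemma K_decr l z1 z2 : 1 < z1 -> z1 < z2 -> K l z2 < K l z1.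
Proof.
  intros H1 H2. rewrite !K_eq. apply RInt_lt; [lra| intros; apply cont_K; lra| intros; apply cont_K; lra|].
  intros y Hy. unfold Rdiv. apply Rmult_lt_compat_l; [apply gl_pos; lra|].
  apply inv_pow_lt. lra.
Qed.

Lemma K_step l z : 1 < z -> K (S (S l)) z < 4 * K l z.
Proof.
  intros Hz. rewrite !K_eq. rewrite <- RInt_mulc by (apply ex_K; lra).
  apply RInt_lt; [lra| |intros; apply cont_K; lra|].
  - intros y Hy. apply (continuous_scal_r 4 (fun y => gl l y / (y + z) ^ S l)). apply cont_K; lra.
  - intros y Hy. unfold gl. set (a := 1 - y^2). set (s := y + z).
    assert (Ha : 0 < a) by (unfold a; nra). assert (Hs : 0 < s) by (unfold s; lra).
    assert (Has0 : a < 2 * s) by (unfold a, s; nra).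
    assert (Has : a * a < 4 * (s * s)) by nra.
    assert (Hal : 0 < a ^ l) by (apply pow_lt; lra).
    assert (Hsl : 0 < s ^ l) by (apply pow_lt; lra).
    simpl. apply (Rmult_lt_reg_r (s * (s * (s * s ^ l)))).
    { repeat apply Rmult_lt_0_compat; lra. }
    field_simplify; [|lra|lra].
    replace (a ^ 2) with (a * a) by ring. replace (s ^ 2) with (s * s) by ring.
    nra.
Qed.

Lemma K_upper l z : 1 < z -> K l z <= Il l / (z - 1) ^ (S l).
Proof.
  intros Hz. rewrite K_eq. unfold Il. unfold Rdiv at 2. rewrite Rmult_comm.
  rewrite <- RInt_mulc by apply ex_Il.
  apply RInt_le; [lra| apply ex_K; lra| |].
  - apply (ex_RInt_scal (V := R_CompleteNormedModule) (gl l) (-1) 1). apply ex_Il.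
  - intros y Hy. unfold Rdiv. rewrite (Rmult_comm (/ _)). apply Rmult_le_compat_l.
    + left. apply gl_pos. lra.
    + apply inv_pow_le. lra.
Qed.

Lemma K_lower l z : 1 < z -> Il l / (z + 1) ^ (S l) <= K l z.
Proof.
  intros Hz. rewrite K_eq. unfold Il. unfold Rdiv at 1. rewrite Rmult_comm.
  rewrite <- RInt_mulc by apply ex_Il.
  apply RInt_le; [lra| | apply ex_K; lra |].
  - apply (ex_RInt_scal (V := R_CompleteNormedModule) (gl l) (-1) 1). apply ex_Il.
  - intros y Hy. unfold Rdiv. rewrite (Rmult_comm (/ _)). apply Rmult_le_compat_l.
    + left. apply gl_pos. lra.
    + apply inv_pow_le. lra.
Qed.


Lemma ex_RInt_cab (f : R -> R) a b : a <= b -> (forall y, a <= y <= b -> continuous f y) -> ex_RInt f a b.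
Proof.
  intros Hab H. apply (ex_RInt_continuous (V := R_CompleteNormedModule)). intros y.
  rewrite Rmin_left, Rmax_right by lra. apply H.
Qed.

Lemma sym_int (f : R -> R) : (forall y, -1 <= y <= 1 -> continuous f y) ->
  RInt f (-1) 1 = RInt (fun y => f y + f (- y)) 0 1.
Proof.
  intros Hc.
  assert (E1 : ex_RInt f (-1) 0) by (apply ex_RInt_cab; [lra| intros; apply Hc; lra]).
  assert (E2 : ex_RInt f 0 1) by (apply ex_RInt_cab; [lra| intros; apply Hc; lra]).
  assert (E3 : ex_RInt f (-1 * 0 + 0) (-1 * 1 + 0)).
  { replace (-1 * 0 + 0) with 0 by ring. replace (-1 * 1 + 0) with (-1) by ring.
    apply ex_RInt_swap. exact E1. }
  assert (E4 : ex_RInt (fun y => f (- y)) 0 1).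
  { apply (ex_RInt_ext (V := R_CompleteNormedModule) (fun y => scal (-1) (scal (-1) (f (-1 * y + 0))))).
    - intros y _. change (scal (-1) (scal (-1) (f (-1 * y + 0)))) with (-1 * (-1 * f (-1 * y + 0))).
      assert (Hy : -1 * (y:R) + 0 = - (y:R) :> R) by ring. rewrite Hy. change (-1 * (-1 * f (- y)) = f (- y) :> R). ring.
    - apply (ex_RInt_scal (V := R_CompleteNormedModule)). apply (ex_RInt_comp_lin (V := R_CompleteNormedModule)). exact E3. }
  pose proof (RInt_comp_lin (V := R_CompleteNormedModule) f (-1) 0 0 1 E3) as H.
  change (RInt (fun y => -1 * f (-1 * y + 0)) 0 1 = RInt f (-1 * 0 + 0) (-1 * 1 + 0)) in H.
  replace (-1 * 0 + 0) with 0 in H by ring. replace (-1 * 1 + 0) with (-1) in H by ring.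
  rewrite (RInt_ext (V := R_CompleteNormedModule) (fun y => -1 * f (-1 * y + 0)) (fun y => -1 * f (- y))) in H.
  2:{ intros y _. assert (Hy : -1 * (y:R) + 0 = - (y:R) :> R) by ring. rewrite Hy. reflexivity. }
  rewrite RInt_mulc in H by exact E4.
  rewrite <- (opp_RInt_swap (V := R_CompleteNormedModule) f (-1) 0 E1) in H.
  change (opp (RInt f (-1) 0)) with (- RInt f (-1) 0) in H.
  rewrite (RInt_plus (V := R_CompleteNormedModule) f (fun y => f (- y))) by assumption.
  rewrite <- (RInt_Chasles (V := R_CompleteNormedModule) f (-1) 0 1) by assumption.
  change (plus (RInt f (-1) 0) (RInt f 0 1) = plus (RInt f 0 1) (RInt (fun y => f (- y)) 0 1)).
  unfold plus; simpl. lra.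
Qed.

Lemma pow_diff_mono X1 Y1 X2 Y2 n : 0 <= Y2 <= X2 -> 0 <= Y1 <= X1 -> Y2 <= Y1 -> X2 <= X1 ->
  X2 - Y2 <= X1 - Y1 -> X2 ^ n - Y2 ^ n <= X1 ^ n - Y1 ^ n.
Proof.
  intros H1 H2 H3 H4 H5. induction n as [|n IH]; simpl; [lra|].
  assert (A1 : 0 <= X2 ^ n - Y2 ^ n) by (assert (Y2 ^ n <= X2 ^ n) by (apply pow_incr; lra); lra).
  assert (A2 : 0 <= Y2 ^ n) by (apply pow_le; lra).
  assert (A3 : Y2 ^ n <= Y1 ^ n) by (apply pow_incr; lra).
  replace (X2 * X2 ^ n - Y2 * Y2 ^ n) with (X2 * (X2 ^ n - Y2 ^ n) + Y2 ^ n * (X2 - Y2)) by ring.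
  replace (X1 * X1 ^ n - Y1 * Y1 ^ n) with (X1 * (X1 ^ n - Y1 ^ n) + Y1 ^ n * (X1 - Y1)) by ring.
  apply Rplus_le_compat.
  - apply Rmult_le_compat; lra.
  - apply Rmult_le_compat; lra.
Qed.

Lemma div_le a b c d : 0 < b -> 0 < d -> a * d <= c * b -> a / b <= c / d.
Proof.
  intros Hb Hd H. apply (Rmult_le_reg_r (b * d)); [nra|].
  replace (a / b * (b * d)) with (a * d) by (field; lra).
  replace (c / d * (b * d)) with (c * b) by (field; lra). exact H.
Qed.

Lemma pointwise_mono n w z y : 1 < w -> w < z -> 0 < y < 1 ->
  (z / (y + z)) ^ n + (z / (- y + z)) ^ n <= (w / (y + w)) ^ n + (w / (- y + w)) ^ n.
Proof.
  intros Hw Hz Hy.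
  assert (D : (z / (y + z)) ^ n - (w / (y + w)) ^ n <= (w / (- y + w)) ^ n - (z / (- y + z)) ^ n).
  { apply pow_diff_mono.
    - split; [apply Rlt_le, Rdiv_lt_0_compat; lra|]. apply div_le; nra.
    - split; [apply Rlt_le, Rdiv_lt_0_compat; lra|]. apply div_le; nra.
    - apply div_le; nra.
    - apply div_le; nra.
    - replace (z / (y + z) - w / (y + w)) with (y * (z - w) / ((y + z) * (y + w))) by (field; lra).
      replace (w / (- y + w) - z / (- y + z)) with (y * (z - w) / ((- y + w) * (- y + z))) by (field; lra).
      apply div_le; try nra.
      assert (0 <= y * (z - w)) by nra.
      apply Rmult_le_compat_l; [lra|]. nra. }
  lra.
Qed.

Definition hK l u y := gl l y / (y + u) ^ (S l) + gl l (- y) / (- y + u) ^ (S l).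

Lemma hK_cont l u y : 0 <= y <= 1 -> 1 < u -> continuous (hK l u) y.
Proof.
  intros Hy Hu. apply (ex_derive_continuous (hK l u)). unfold hK, gl.
  auto_derive. repeat split; try (apply (pow_nonzero _ (S l)); lra); try (intro; apply (pow_nonzero _ (S l) ltac:(lra)); simpl; lra).
Qed.

Lemma K_sym l u : 1 < u -> K l u = RInt (hK l u) 0 1.
Proof.
  intros Hu. rewrite K_eq. rewrite (sym_int (fun y => gl l y / (y + u) ^ S l)).
  - reflexivity.
  - intros y Hy. apply cont_K. lra.
Qed.

Lemma hK_rewrite l u y : 1 < u -> 0 < y < 1 ->
  u ^ S l * hK l u y = gl l y * ((u / (y + u)) ^ S l + (u / (- y + u)) ^ S l).
Proof.
  intros Hu Hy. unfold hK. replace (gl l (- y)) with (gl l y) by (unfold gl; f_equal; ring).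
  unfold Rdiv. rewrite !Rpow_mult_distr, !pow_inv. ring.
Qed.

Lemma K_scaled l w z : 1 < w -> w < z -> z ^ S l * K l z <= w ^ S l * K l w.
Proof.
  intros Hw Hz. rewrite !K_sym by lra.
  assert (E : forall u, 1 < u -> ex_RInt (hK l u) 0 1).
  { intros u Hu. apply ex_RInt_cab; [lra|]. intros; apply hK_cont; lra. }
  rewrite <- !RInt_mulc by (apply E; lra).
  apply RInt_le; [lra| | |].
  - apply (ex_RInt_scal (V := R_CompleteNormedModule)). apply E; lra.
  - apply (ex_RInt_scal (V := R_CompleteNormedModule)). apply E; lra.
  - intros y Hy. rewrite !hK_rewrite by lra. apply Rmult_le_compat_l.
    + left. apply gl_pos. lra.
    + apply pointwise_mono; lra.
Qed.


Lemma inv_pow_deriv' m t u : t + u <> 0 ->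
  is_derive (fun u => / (t + u) ^ m) u (- INR m / (t + u) ^ (S m)).
Proof.
  intros H. apply (is_derive_ext (fun u => / (u + t) ^ m)).
  - intros x. rewrite Rplus_comm. reflexivity.
  - rewrite (Rplus_comm t u). apply inv_pow_deriv. rewrite Rplus_comm. exact H.
Qed.

Lemma fder l m t u : t + u <> 0 ->
  is_derive (fun u => gl l t / (t + u) ^ m) u (gl l t * (- INR m / (t + u) ^ (S m))).
Proof.
  intros H. apply (is_derive_scal (fun u => / (t + u) ^ m)). apply inv_pow_deriv'. exact H.
Qed.

Lemma gl_cont_pt l y : continuity_pt (gl l) y.
Proof. apply continuity_pt_filterlim. apply gl_cont. Qed.

Lemma cont2d l m x y : y + x <> 0 ->
  continuity_2d_pt (fun u v => gl l v * (- INR m / (v + u) ^ (S m))) x y.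
Proof.
  intros H. apply continuity_2d_pt_mult.
  - apply (continuity_1d_2d_pt_comp (gl l) (fun u v => v)).
    + apply gl_cont_pt.
    + apply continuity_2d_pt_id2.
  - apply continuity_2d_pt_mult.
    + apply continuity_2d_pt_const.
    + apply continuity_2d_pt_inv.
      * apply (continuity_1d_2d_pt_comp (fun w => w ^ S m) (fun u v => v + u)).
        -- apply derivable_continuous_pt. apply derivable_pt_pow.
        -- apply continuity_2d_pt_plus; [apply continuity_2d_pt_id2| apply continuity_2d_pt_id1].
      * apply pow_nonzero. exact H.
Qed.

Lemma Kgen_deriv l m z : 1 < z ->
  is_derive (fun z => RInt (fun y => gl l y / (y + z) ^ m) (-1) 1) z
    (- INR m * RInt (fun y => gl l y / (y + z) ^ (S m)) (-1) 1).
Proof.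
  intros Hz.
  assert (Hloc : locally z (fun x => 1 < x)).
  { apply (open_gt 1). exact Hz. }
  pose proof (is_derive_RInt_param (fun u t => gl l t / (t + u) ^ m) (-1) 1 z) as P.
  rewrite Rmin_left, Rmax_right in P by lra.
  assert (Ed : forall u t, 0 < t + u ->
     Derive (fun z0 => gl l t / (t + z0) ^ m) u = gl l t * (- INR m / (t + u) ^ (S m))).
  { intros u t Ht. apply is_derive_unique. apply fder. lra. }
  assert (HP := P).
  clear P.
  match type of HP with _ -> _ -> _ -> is_derive _ _ ?D => assert (ED : D = - INR m * RInt (fun y => gl l y / (y + z) ^ (S m)) (-1) 1) end.
  { rewrite <- RInt_mulc by (apply ex_K; lra).
    apply RInt_ext. intros t Ht. rewrite Rmin_left, Rmax_right in Ht by lra.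
    rewrite Ed by lra. change (gl l t * (- INR m / (t + z) ^ S m) = - INR m * (gl l t / (t + z) ^ S m) :> R). unfold Rdiv. ring. }
  rewrite ED in HP. apply HP.
  - apply (filter_imp (fun x => 1 < x)); [|exact Hloc].
    intros x Hx t Ht. eexists. apply fder. lra.
  - intros t Ht.
    apply (continuity_2d_pt_ext_loc (fun u v => gl l v * (- INR m / (v + u) ^ (S m)))).
    + assert (Hd : 0 < (z - 1) / 2) by lra.
      exists (mkposreal _ Hd). simpl. intros u v Hu Hv.
      apply Rabs_lt_between' in Hu. apply Rabs_lt_between' in Hv.
      symmetry. apply Ed; lra.
    + apply cont2d. lra.
  - apply (filter_imp (fun x => 1 < x)); [|exact Hloc].
    intros x Hx. apply ex_K. exact Hx.
Qed.


Fixpoint cD (l n : nat) : R :=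
  match n with O => - / 2 ^ l | S n => cD l n * - INR (n + S l) end.

Definition Dn l n z := cD l n * RInt (fun y => gl l y / (y + z) ^ (n + S l)) (-1) 1.

Lemma smooth_phi l : Nat.odd l = true -> smooth_on_gt 1 (phi l).
Proof.
  intros Ho. exists (Dn l). split.
  - intros z Hz. rewrite phi_K by auto. reflexivity.
  - intros n z Hz. apply is_derive_Reals. unfold Dn.
    assert (H := is_derive_scal _ z (cD l n) _ (Kgen_deriv l (n + S l) z Hz)).
    replace (cD l (S n) * RInt (fun y => gl l y / (y + z) ^ (S n + S l)) (-1) 1)
      with (cD l n * (- INR (n + S l) * RInt (fun y => gl l y / (y + z) ^ S (n + S l)) (-1) 1)).
    + exact H.
    + simpl cD. change (S n + S l)%nat with (S (n + S l)). rewrite Rmult_assoc. reflexivity.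
Qed.

Lemma Leg_ex l z : 1 < z -> ex_RInt (fun y => Legendre l y / (y + z)) (-1) 1.
Proof.
  intros Hz.
  set (c := / (2 ^ l * INR (fact l))).
  assert (Hex : ex_RInt (fun y => peval (Fp l l) y / (y + z) ^ 1) (-1) 1).
  { apply ex_RInt_gw; auto. intros y; eexists; apply peval_deriv. }
  assert (E : forall y, Legendre l y / (y + z) = c * (peval (Fp l l) y / (y + z) ^ 1)).
  { intros y. rewrite Legendre_eq. fold c. simpl. unfold Rdiv. rewrite Rmult_1_r. ring. }
  eapply (ex_RInt_ext (V := R_CompleteNormedModule) (fun y => c * (peval (Fp l l) y / (y + z) ^ 1))).
  - intros y _. symmetry. exact (E y).
  - exact (ex_RInt_scal (V := R_CompleteNormedModule) _ (-1) 1 c Hex).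
Qed.

Lemma phi_RInt l z : 1 < z -> phi l z = RInt (fun y => Legendre l y / (y + z)) (-1) 1.
Proof. intros Hz. unfold phi. apply Rint_RInt. apply Leg_ex. exact Hz. Qed.

Lemma Rint_negLeg l m : 0 < m ->
  Rint (fun y => - Legendre l y / (y + 1 + m)) (-1) 1 = - phi l (1 + m).
Proof.
  intros Hm. rewrite phi_RInt by lra.
  assert (Hex := Leg_ex l (1 + m) ltac:(lra)).
  assert (E : forall y, - Legendre l y / (y + 1 + m) = opp (Legendre l y / (y + (1 + m)))).
  { intros y. set (L := Legendre l y). rewrite Rplus_assoc. unfold opp; simpl. unfold Rdiv. ring. }
  assert (Hex2 : ex_RInt (fun y => - Legendre l y / (y + 1 + m)) (-1) 1).
  { eapply (ex_RInt_ext (V := R_CompleteNormedModule) (fun y => opp (Legendre l y / (y + (1 + m))))).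
    - intros y _. symmetry. exact (E y).
    - exact (ex_RInt_opp (V := R_CompleteNormedModule) _ (-1) 1 Hex). }
  rewrite (Rint_RInt _ _ _ Hex2).
  rewrite (RInt_ext (V := R_CompleteNormedModule) (fun y => - Legendre l y / (y + 1 + m)) (fun y => opp (Legendre l y / (y + (1 + m))))).
  2:{ intros y _. exact (E y). }
  exact (RInt_opp (V := R_CompleteNormedModule) _ _ _ Hex).
Qed.

Lemma bernoulli q n : 0 <= q <= 1 -> 1 - q ^ n <= INR n * (1 - q).
Proof.
  intros Hq. induction n as [|n IH]; simpl; [lra|].
  assert (H1 : q ^ n <= 1 ^ n) by (apply pow_incr; lra). rewrite pow1 in H1.
  assert (0 <= q ^ n) by (apply pow_le; lra).
  change (1 - q * q ^ n <= INR (S n) * (1 - q)). rewrite S_INR. nra.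
Qed.

Lemma odd_2k1 k : Nat.odd (2 * k + 1) = true.
Proof. apply Nat.odd_spec. exists k. reflexivity. Qed.


Lemma part_i z : 1 < z ->
  (forall k : nat, phi (2 * k + 1) z < phi (2 * k + 3) z) /\
  (forall k : nat, phi (2 * k + 1) z < 0).
Proof.
  intros Hz. split; intros k.
  - rewrite !phi_K by (auto; try apply odd_2k1; apply Nat.odd_spec; exists (S k); lia).
    replace (2 * k + 3)%nat with (S (S (2 * k + 1))) by lia.
    set (l := (2 * k + 1)%nat).
    assert (Hs := K_step l z Hz).
    assert (Hp : 0 < 2 ^ l) by (apply pow_lt; lra).
    change (2 ^ S (S l)) with (2 * (2 * 2 ^ l)).
    replace (- / (2 * (2 * 2 ^ l)) * K (S (S l)) z) with (/ 2 ^ l * (- (K (S (S l)) z / 4))) by (field; lra).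
    replace (- / 2 ^ l * K l z) with (/ 2 ^ l * (- K l z)) by ring.
    apply Rmult_lt_compat_l; [apply Rinv_0_lt_compat; lra| lra].
  - rewrite phi_K by (auto; apply odd_2k1).
    assert (HK := K_pos (2 * k + 1) z Hz).
    assert (Hp : 0 < / 2 ^ (2 * k + 1)) by (apply Rinv_0_lt_compat, pow_lt; lra).
    nra.
Qed.

Lemma phi_abs l z : 1 < z -> Nat.odd l = true -> Rabs (phi l z) = / 2 ^ l * K l z.
Proof.
  intros Hz Ho. rewrite phi_K by auto.
  assert (HK := K_pos l z Hz).
  assert (Hp : 0 < / 2 ^ l) by (apply Rinv_0_lt_compat, pow_lt; lra).
  rewrite Rabs_left by nra. ring.
Qed.

Lemma part_ii_mono l z1 z2 : Nat.odd l = true -> 1 < z1 -> z1 < z2 -> phi l z1 < phi l z2.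
Proof.
  intros Ho H1 H2. rewrite !phi_K by (auto; lra).
  assert (HK := K_decr l z1 z2 H1 H2).
  assert (Hp : 0 < / 2 ^ l) by (apply Rinv_0_lt_compat, pow_lt; lra).
  nra.
Qed.

Lemma part_ii_asym l : Nat.odd l = true -> forall eps, 0 < eps -> exists M, forall z, M < z ->
  Rabs (phi l z / (- Aconst l / (z - 1) ^ (l + 1)) - 1) < eps.
Proof.
  intros Ho eps He. rewrite Nat.add_1_r.
  set (n := S l).
  exists (2 * INR n / eps + 1). intros z Hz.
  assert (Hn : 0 <= INR n) by apply pos_INR.
  assert (H0 : 0 <= 2 * INR n / eps) by (apply Rdiv_le_0_compat; lra).
  assert (Hz1 : 1 < z) by lra.
  assert (HI := Il_pos l).
  assert (HK := K_pos l z Hz1).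
  assert (Hp : 0 < 2 ^ l) by (apply pow_lt; lra).
  assert (Hzm : 0 < (z - 1) ^ n) by (apply pow_lt; lra).
  assert (Hzp : 0 < (z + 1) ^ n) by (apply pow_lt; lra).
  rewrite phi_K, Aconst_I by auto.
  replace (- / 2 ^ l * K l z / (- (/ 2 ^ l * Il l) / (z - 1) ^ n)) with (K l z * (z - 1) ^ n / Il l)
    by (field; repeat split; lra).
  set (r := K l z * (z - 1) ^ n / Il l).
  assert (Hup := K_upper l z Hz1). fold n in Hup.
  assert (Hlo := K_lower l z Hz1). fold n in Hlo.
  assert (R1 : r <= 1).
  { unfold r. apply (Rmult_le_reg_r (Il l / (z - 1) ^ n)).
    - apply Rdiv_lt_0_compat; lra.
    - replace (K l z * (z - 1) ^ n / Il l * (Il l / (z - 1) ^ n)) with (K l z) by (field; lra).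
      lra. }
  set (q := (z - 1) / (z + 1)).
  assert (Hq : 0 <= q <= 1).
  { unfold q; split; [apply Rdiv_le_0_compat; lra|].
    apply (Rmult_le_reg_r (z + 1)); [lra|].
    replace ((z - 1) / (z + 1) * (z + 1)) with (z - 1) by (field; lra). lra. }
  assert (R2 : q ^ n <= r).
  { unfold r, q. unfold Rdiv at 1. rewrite Rpow_mult_distr, pow_inv.
    apply (Rmult_le_reg_r (Il l / (z - 1) ^ n)).
    - apply Rdiv_lt_0_compat; lra.
    - replace (K l z * (z - 1) ^ n / Il l * (Il l / (z - 1) ^ n)) with (K l z) by (field; lra).
      replace ((z - 1) ^ n * / (z + 1) ^ n * (Il l / (z - 1) ^ n)) with (Il l / (z + 1) ^ n) by (field; lra).
      exact Hlo. }
  assert (B := bernoulli q n Hq).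
  assert (Q : 1 - q = 2 / (z + 1)) by (unfold q; field; lra).
  rewrite Q in B.
  assert (C : INR n * (2 / (z + 1)) < eps).
  { apply (Rmult_lt_reg_r (z + 1)); [lra|].
    replace (INR n * (2 / (z + 1)) * (z + 1)) with (2 * INR n) by (field; lra).
    assert (2 * INR n / eps * eps = 2 * INR n) by (field; lra).
    nra. }
  rewrite Rabs_left1 by lra. lra.
Qed.

Lemma part_iii_a l z : Nat.odd l = true -> 1 < z -> Rabs (phi l z) <= Aconst l / (z - 1) ^ (l + 1).
Proof.
  intros Ho Hz. rewrite phi_abs, Aconst_I by auto. rewrite Nat.add_1_r.
  assert (H := K_upper l z Hz).
  assert (Hp : 0 < / 2 ^ l) by (apply Rinv_0_lt_compat, pow_lt; lra).
  unfold Rdiv in *. rewrite Rmult_assoc. apply Rmult_le_compat_l; lra.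
Qed.

Lemma part_iii_b mstar l z : 0 < mstar -> Nat.odd l = true -> 1 + mstar < z ->
  Rabs (phi l z) <= Cconst mstar l * Aconst l / z ^ (l + 1).
Proof.
  intros Hm Ho Hz. set (w := 1 + mstar).
  assert (Hw : 1 < w) by (unfold w; lra).
  assert (E : Cconst mstar l * Aconst l = w ^ (l + 1) * (/ 2 ^ l * K l w)).
  { unfold Cconst. rewrite Rint_negLeg by auto. fold w.
    rewrite (Rint_RInt (fun y => (1 - y ^ 2) ^ l)) by apply ex_Il.
    change (RInt (fun y => (1 - y ^ 2) ^ l) (-1) 1) with (Il l).
    rewrite Aconst_I, phi_K by auto.
    assert (HI := Il_pos l).
    assert (Hp : 0 < 2 ^ l) by (apply pow_lt; lra).
    field. split; lra. }
  rewrite E, phi_abs by (auto; lra). rewrite Nat.add_1_r.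
  assert (S1 := K_scaled l w z Hw Hz).
  assert (Hz0 : 0 < z ^ S l) by (apply pow_lt; lra).
  assert (Hp : 0 < / 2 ^ l) by (apply Rinv_0_lt_compat, pow_lt; lra).
  apply (Rmult_le_reg_r (z ^ S l)); [lra|].
  assert (Eq1 : w ^ S l * (/ 2 ^ l * K l w) / z ^ S l * z ^ S l = / 2 ^ l * (w ^ S l * K l w)).
  { field. split; [apply pow_nonzero; lra| lra]. }
  rewrite Eq1.
  replace (/ 2 ^ l * K l z * z ^ S l) with (/ 2 ^ l * (z ^ S l * K l z)) by ring.
  apply Rmult_le_compat_l; lra.
Qed.

Theorem lemma9p3 (mstar : R) (Hm : 0 < mstar) (HL : Lambda mstar = 1) :
  (* (i) *)
  (forall z, 1 < z ->
     (forall k : nat, phi (2 * k + 1) z < phi (2 * k + 3) z) /\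
     (forall k : nat, phi (2 * k + 1) z < 0)) /\
  (* (ii) *)
  (forall l : nat, Nat.odd l = true ->
     smooth_on_gt 1 (phi l) /\
     (forall z1 z2, 1 < z1 -> z1 < z2 -> phi l z1 < phi l z2) /\
     (forall eps, 0 < eps -> exists M, forall z, M < z ->
        Rabs (phi l z / (- Aconst l / (z - 1) ^ (l + 1)) - 1) < eps)) /\
  (* (iii) *)
  (forall l : nat, Nat.odd l = true ->
     (forall z, 1 < z -> Rabs (phi l z) <= Aconst l / (z - 1) ^ (l + 1)) /\
     (forall z, 1 + mstar < z ->
        Rabs (phi l z) <= Cconst mstar l * Aconst l / z ^ (l + 1))).
Proof.
  split; [exact part_i|]. split.
  - intros l Ho. split; [apply smooth_phi; auto|]. split.
    + intros z1 z2 H1 H2. apply part_ii_mono; auto.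
    + apply part_ii_asym; auto.
  - intros l Ho. split.
    + intros z Hz. apply part_iii_a; auto.
    + intros z Hz. apply part_iii_b; auto.
Qed.
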